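(* Let $A$ be a T-brace and let $a\in\zeta_2(\star,A)$ be an element of infinite order in $(A,+)$. Suppose that the torsion subgroup of the additive group of $\zeta(\star,A)$ is a $p$-group for some prime $p$. Then $a\star a$ has additive order at most $p$ (i.e. $p(a\star a)=0$).
   Context: A (left) brace is a set $A$ with two operations $+$ and $\cdot$ such that $(A,+)$ is an abelian group, $(A,\cdot)$ is a group, and $a(b+c)=ab+ac-a$ for all $a,b,c\in A$. Put $a\star b=ab-a-b$. A subbrace is a subset which is a subgroup of both $(A,+)$ and $(A,\cdot)$; a subbrace $L$ is an ideal if $a\star z, z\star a\in L$ for all $a\in A$, $z\in L$, and then the quotient brace $A/L$ is defined. $A$ is a T-brace if whenever $I$ is an ideal of $J$ and $J$ is an ideal of $A$, then $I$ is an ideal of $A$. The $\star$-center is $\zeta(\star,A)=\{a: a\star x=x\star a=0\ \forall x\}$; $\zeta_2(\star,A)$ is given by $\zeta_2(\star,A)/\zeta(\star,A)=\zeta(\star,A/\zeta(\star,A))$. *)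

(* Defs.v *)
From HB Require Import structures.
From mathcomp Require Import all_boot all_order all_algebra.
Set Implicit Arguments. Unset Strict Implicit. Unset Printing Implicit Defensive.
Import GRing.Theory.
Local Open Scope ring_scope.

Record brace (V : zmodType) := Brace {
  bmul : V -> V -> V;
  binv : V -> V;
  bone : V;
  bmulA : forall x y z, bmul x (bmul y z) = bmul (bmul x y) z;
  bmul1g : forall x, bmul bone x = x;
  bmulg1 : forall x, bmul x bone = x;
  bmulVg : forall x, bmul (binv x) x = bone;
  bmulgV : forall x, bmul x (binv x) = bone;
  bmulDr : forall a b c, bmul a (b + c) = bmul a b + bmul a c - a
}.

Section BraceDefs.
Variables (V : zmodType) (B : brace V).

Definition bstar (a b : V) : V := bmul B a b - a - b.

Definition subbrace (L : V -> Prop) : Prop :=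
  [/\ L 0, (forall x y, L x -> L y -> L (x - y)),
      L (bone B), (forall x y, L x -> L y -> L (bmul B x y))
    & (forall x, L x -> L (binv B x))].

Definition ideal_of (I J : V -> Prop) : Prop :=
  [/\ subbrace I, (forall x, I x -> J x)
    & forall a z, J a -> I z -> I (bstar a z) /\ I (bstar z a)].

Definition ideal (I : V -> Prop) : Prop := ideal_of I (fun _ => True).

Definition T_brace : Prop :=
  forall I J : V -> Prop, subbrace J -> ideal J -> ideal_of I J -> ideal I.

Definition zeta (a : V) : Prop := forall x, bstar a x = 0 /\ bstar x a = 0.

(* second star-center: zeta_2/zeta = zeta(A/zeta); unfolded, since in A/L
   (a+L) * (x+L) = (a * x) + L *)
Definition zeta2 (a : V) : Prop := forall x, zeta (bstar a x) /\ zeta (bstar x a).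

End BraceDefs.

(* Main.v *)
Require Import Defs.
From mathcomp Require Import all_boot all_order all_algebra.
From mathcomp Require Import ring.
Import GRing.Theory Num.Theory.
Local Open Scope ring_scope.
Section S.
Variables (V : zmodType) (B : brace V).
Local Notation m := (bmul B).
Local Notation s := (bstar B).

Lemma mul0' x : m x 0 = x.
Proof.
have h := bmulDr B x 0 0; rewrite addr0 in h.
apply/eqP; rewrite -subr_eq0; apply/eqP; apply: (addrI (m x 0)); by rewrite addr0 addrA -h.
Qed.

Lemma one0 : bone B = 0.
Proof. by rewrite -[LHS]mul0' bmul1g. Qed.

Lemma starDr x y z : s x (y + z) = s x y + s x z.
Proof.
rewrite /bstar bmulDr opprD !addrA; congr (_ - _).
rewrite (addrAC (m x y) (m x z)) (addrAC (m x y - x) (m x z)).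
rewrite (addrAC (m x y - x - x) (m x z)).
rewrite [RHS](addrAC (m x y - x - y) (m x z)).
by rewrite (addrAC (m x y - x) (-x)).
Qed.

Lemma star0r x : s x 0 = 0.
Proof. by rewrite /bstar mul0' subrr sub0r oppr0. Qed.
Lemma star0l x : s 0 x = 0.
Proof. by rewrite /bstar -one0 bmul1g one0 subr0 subrr. Qed.
Lemma starNr x y : s x (- y) = - s x y.
Proof. by apply/eqP; rewrite -addr_eq0 -starDr addNr star0r. Qed.
Lemma starBr x y z : s x (y - z) = s x y - s x z.
Proof. by rewrite starDr starNr. Qed.
Lemma starzr x y k : s x (y *~ k) = (s x y) *~ k.
Proof.
elim/int_rec: k => [|n IH|n IH]; first by rewrite !mulr0z star0r.
  by rewrite -addn1 PoszD !mulrzDr starDr IH.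
by rewrite -addn1 PoszD opprD !mulrzDr starDr IH !mulrN1z starNr.
Qed.

Lemma prodF x y z : s (m x y) z = s x (s y z) + s x z + s y z.
Proof.
rewrite [X in s x X]/bstar !starBr subrK.
rewrite /bstar bmulA.
set A := m x (m y z); set M := m y z; set Bx := m x y; set C := m x z.
rewrite !opprD !opprK !addrA; congr (_ - _).
rewrite (addrAC _ (-Bx) x) (addrAC _ (-M) x) subrK.
rewrite (addrAC _ (-Bx) y) (addrAC _ (-Bx) M) (addrAC _ (-Bx) (-y)).
by rewrite (addrAC _ y M) subrK addrK.
Qed.

Local Notation Z := (zeta B).
Local Notation Z2 := (zeta2 B).

Lemma mE x y : m x y = x + y + s x y.
Proof. by rewrite /bstar -[m x y - x - y]addrA -opprD [RHS]addrC subrK. Qed.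

Lemma Zr w x : Z w -> s x w = 0. Proof. by move=> h; case: (h x). Qed.
Lemma Zl w x : Z w -> s w x = 0. Proof. by move=> h; case: (h x). Qed.
Lemma Z0 : Z 0. Proof. by move=> x; rewrite star0l star0r. Qed.
Lemma mZ w y : Z w -> m w y = w + y.
Proof. by move=> h; rewrite mE Zl // addr0. Qed.
Lemma binvZ w : Z w -> binv B w = - w.
Proof.
move=> h; have := bmulgV B w; rewrite mZ // one0 => /eqP.
by rewrite addrC addr_eq0 => /eqP.
Qed.
Lemma ZN w : Z w -> Z (- w).
Proof.
move=> h x; split; last by rewrite starNr Zr // oppr0.
have := prodF (binv B w) w x; rewrite bmulVg one0 star0l (Zl w x h) star0r add0r addr0.
by rewrite binvZ // => <-.
Qed.
Lemma ZD u v : Z u -> Z v -> Z (u + v).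
Proof.
move=> hu hv x; split; last by rewrite starDr !Zr // addr0.
by rewrite -(mZ u v hu) prodF (Zl v x hv) star0r (Zl u x hu) !addr0.
Qed.
Lemma ZB u v : Z u -> Z v -> Z (u - v).
Proof. by move=> hu hv; apply: ZD => //; apply: ZN. Qed.
Lemma Zz w k : Z w -> Z (w *~ k).
Proof.
move=> h; elim/int_rec: k => [|n IH|n IH]; first by rewrite mulr0z; apply: Z0.
  by rewrite -addn1 PoszD mulrzDr; apply: ZD.
by rewrite -addn1 PoszD opprD mulrzDr mulrN1z; apply: ZB.
Qed.

Lemma Qf u v x : Z (s u v) -> s (u + v) x = s u (s v x) + s u x + s v x.
Proof.
move=> h.
have hb : Z (binv B (s u v)) by rewrite binvZ //; apply: ZN.
have e : m (m u v) (binv B (s u v)) = u + v.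
  by rewrite mE (Zr _ _ hb) addr0 binvZ // mE addrK.
by rewrite -e prodF (Zl _ x hb) star0r add0r addr0 prodF.
Qed.

Lemma Z2l u x : Z2 u -> Z (s u x). Proof. by move=> h; case: (h x). Qed.
Lemma Z2r u x : Z2 u -> Z (s x u). Proof. by move=> h; case: (h x). Qed.
Lemma ZZ2 w : Z w -> Z2 w.
Proof. by move=> h x; rewrite Zl // Zr //; split; apply: Z0. Qed.

Lemma Z2Dl u v x : Z2 u -> Z2 v -> s (u + v) x = s u x + s v x.
Proof. by move=> hu hv; rewrite (Qf _ _ _ (Z2l _ _ hu)) (Zr _ _ (Z2l v x hv)) add0r. Qed.
Lemma Z2D u v : Z2 u -> Z2 v -> Z2 (u + v).
Proof.
move=> hu hv x; rewrite Z2Dl // starDr; split; apply: ZD; 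
  by [apply: Z2l | apply: Z2r].
Qed.
Lemma Z2N u : Z2 u -> Z2 (- u) /\ forall x, s (- u) x = - s u x.
Proof.
move=> hu.
have e x : s u (s (- u) x) + s u x + s (- u) x = 0.
  by rewrite -Qf ?subrr ?star0l // starNr; apply: ZN; apply: Z2l.
have hN x : Z (s (- u) x).
  have -> : s (- u) x = - (s u (s (- u) x) + s u x).
    by apply/eqP; rewrite -addr_eq0 addrC e.
  by apply: ZN; apply: ZD; apply: Z2l.
have h2 : Z2 (- u) by move=> x; split => //; rewrite starNr; apply: ZN; apply: Z2r.
split => // x; apply/eqP; rewrite -addr_eq0.
by rewrite addrC -(e x) (Zr _ _ (hN x)) add0r.
Qed.
Lemma Z2z u k : Z2 u -> Z2 (u *~ k) /\ forall x, s (u *~ k) x = (s u x) *~ k.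
Proof.
move=> h; elim/int_rec: k => [|n [IH1 IH2]|n [IH1 IH2]].
- by rewrite mulr0z; split; [apply: ZZ2; apply: Z0 | move=> x; rewrite star0l mulr0z].
- rewrite -addn1 PoszD !mulrzDr; split; first by apply: Z2D.
  by move=> x; rewrite Z2Dl // IH2 mulrzDr.
- have [hN1 hN2] := Z2N _ h.
  rewrite -addn1 PoszD opprD !mulrzDr !mulrN1z; split; first by apply: Z2D.
  by move=> x; rewrite Z2Dl // IH2 hN2 mulrzDr mulrN1z.
Qed.

Lemma sbG (S : V -> Prop) : S 0 -> (forall x y, S x -> S y -> S (x - y)) ->
  (forall x, S x -> Z2 x) -> (forall x y, S x -> S y -> S (s x y)) -> subbrace B S.
Proof.
move=> S0 SB S2 SS.
have SN x : S x -> S (- x) by move=> hx; rewrite -sub0r; apply: SB.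
have SD x y : S x -> S y -> S (x + y).
  by move=> hx hy; rewrite -(opprK y); apply: SB => //; apply: SN.
split => //; first by rewrite one0.
- by move=> x y hx hy; rewrite mE; apply: (SD); [apply: (SD)|apply: (SS)].
- move=> x hx.
  have e : m x (binv B x) = 0 by rewrite bmulgV one0.
  rewrite mE in e.
  have hw : Z (s x (binv B x)) := Z2l _ _ (S2 _ hx).
  set b := binv B x in e hw *.
  have eb : b = - x - s x b.
  by apply/eqP; rewrite -opprD -addr_eq0 addrC addrAC e.
  have hsb : s x b = s x (- x) by rewrite {1}eb starBr (Zr _ _ hw) subr0.
  rewrite eb hsb; apply: (SB); [apply: (SN) | apply: (SS) => //; apply: (SN)]; done.
Qed.

Lemma Kstar a r r' z z' : Z2 a -> Z z -> Z z' ->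
  s (a *~ r + z) (a *~ r' + z') = (s a a) *~ (r * r').
Proof.
move=> ha hz hz'; have [h1 h2] := Z2z _ r ha.
rewrite (Z2Dl _ _ _ h1 (ZZ2 _ hz)) (Zl _ _ hz) addr0 h2 starDr (Zr _ _ hz') addr0.
by rewrite starzr -mulrzA mulrC.
Qed.

Lemma tors (x : V) k : x *~ k = 0 -> k != 0 -> exists n, (0 < n)%N /\ x *+ n = 0.
Proof.
case: k => n.
- by move=> h hn; exists n; split => //; case: n hn {h}.
- move=> h _; exists n.+1; split => //; apply/eqP; rewrite -oppr_eq0; apply/eqP; exact h.
Qed.

Lemma swapz (x : V) k l : x *~ k *~ l = x *~ l *~ k.
Proof. by rewrite -!mulrzA mulrC. Qed.


Lemma main_sec (a : V) (p : nat) :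
  T_brace B -> Z2 a -> (forall n : nat, (0 < n)%N -> a *+ n != 0) -> prime p ->
  (forall z : V, Z z -> forall n : nat, (0 < n)%N -> z *+ n = 0 ->
     exists k : nat, z *+ (p ^ k) = 0) ->
  (s a a) *+ p = 0.
Proof.
move=> HT ha hinf hp htor.
have hc : Z (s a a) := Z2l _ _ ha.
set c := s a a in hc *.
set P : int := p%:R.
pose Jp v := exists n z, Z z /\ v = a *~ (P * n) + z.
pose Ip v := exists mm t, v = a *~ (P * mm) + c *~ (P * P * t).
have JZ2 v : Jp v -> Z2 v.
  by case=> n [z [hz ->]]; apply: Z2D; [exact: (Z2z _ (P*n) ha).1 | apply: ZZ2].
have ZJ z : Z z -> Jp z by move=> hz; exists 0, z; split => //; rewrite mulr0 mulr0z add0r.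
have Jsub : subbrace B Jp.
  apply: sbG.
  - exact: ZJ _ Z0.
  - move=> x y [n [z [hz ->]]] [n' [z' [hz' ->]]]; exists (n - n'), (z - z').
    split; first by apply: ZB.
    rewrite mulrBr mulrzBr opprD !addrA; congr (_ - _).
    by rewrite (addrAC _ z).
  - exact: JZ2.
  - move=> x y hx _; apply: ZJ; apply: Z2l; exact: JZ2.
have Jid : ideal B Jp.
  split => // x z _ hz; split; apply: ZJ; [apply: Z2r | apply: Z2l]; exact: JZ2.
have IJ v : Ip v -> Jp v.
  by case=> mm [t ->]; exists mm, (c *~ (P*P*t)); split => //; apply: Zz.
have IJstar j i : Jp j -> Ip i -> Ip (s j i) /\ Ip (s i j).
  case=> n [z [hz ->]] [mm [t ->]].
  rewrite (Kstar _ _ _ _ _ ha hz (Zz _ _ hc)) (Kstar _ _ _ _ _ ha (Zz _ _ hc) hz).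
  by split; exists 0, (n * mm); rewrite mulr0 mulr0z add0r; congr (_ *~ _); ring.
have Isub : subbrace B Ip.
  apply: sbG.
  - by exists 0, 0; rewrite !mulr0 !mulr0z addr0.
  - move=> x y [m1 [t1 ->]] [m2 [t2 ->]]; exists (m1 - m2), (t1 - t2).
    rewrite !mulrBr !mulrzBr opprD !addrA; congr (_ - _).
    by rewrite (addrAC _ (c *~ _)).
  - by move=> x /IJ /JZ2.
  - move=> x y hx hy; exact: (IJstar x y (IJ _ hx) hy).1.
have Iid : ideal B Ip.
  apply: (HT Ip Jp) => //; split => //; exact: IJstar.
have : Ip (s a (a *~ (P * 1) + c *~ (P * P * 0))).
  have hz : Ip (a *~ (P * 1) + c *~ (P * P * 0)) by exists 1, 0.
  case: Iid => _ _ H; exact: (H a _ I hz).1.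
rewrite mulr1 mulr0 mulr0z addr0 starzr -/c => -[mm [t e]].
have hP0 : P != 0 by rewrite /P pnatr_eq0 -lt0n prime_gt0.
case: (eqVneq mm 0) => [hm0|hm0].
- rewrite hm0 mulr0 mulr0z add0r in e.
  have e2 : c *~ (P * (1 - P * t)) = 0 by rewrite mulrBr mulr1 mulrA mulrzBr e subrr.
  have hq : 1 - P * t != 0.
    rewrite subr_eq0; apply/eqP => h1.
    have : absz (P * t) = 1%N by rewrite -h1.
    rewrite abszM /P natz /= => /eqP; rewrite muln_eq1 => /andP [/eqP hp1 _].
    by rewrite hp1 in hp.
  have [n0 [hn0 hn]] := tors _ _ e2 (mulf_neq0 hP0 hq).
  have [e1 he] := htor c hc n0 hn0 hn.
  have hcp : c *~ (P ^+ e1) = 0 by rewrite /P -natrX mulrz_nat.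
  set x := c *~ P.
  have hx1 : x *~ (1 - P * t) = 0 by rewrite /x -mulrzA.
  have hx2 : x *~ ((P * t) ^+ e1) = 0.
    by rewrite /x -mulrzA exprMn mulrA (mulrC P) -mulrA mulrzA hcp mul0rz.
  have gen k : exists S : int, 1 = (1 - P * t) * S + (P * t) ^+ k.
    elim: k => [|k [S hS]]; first by exists 0; rewrite mulr0 add0r expr0.
    by exists (S + (P * t) ^+ k); rewrite {1}hS exprS; ring.
  have [S hS] := gen e1.
  have -> : c *+ p = x by rewrite /x /P mulrz_nat.
  by rewrite -[x]mulr1z hS mulrzDr mulrzA hx1 hx2 mul0rz addr0.
- exfalso.
  have e' : a *~ (P * mm) = c *~ P - c *~ (P * P * t) by rewrite e addrK.
  have hw : Z (a *~ (P * mm)) by rewrite e'; apply: ZB; apply: Zz.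
  have hcm : c *~ (P * mm) = 0 by rewrite /c -starzr; apply: Zr.
  have : a *~ (P * mm * (P * mm)) = 0.
    rewrite (mulrzA a) e' mulrzBl (swapz c P) (swapz c (P * P * t)) hcm.
    by rewrite !mul0rz subrr.
  move/tors => /(_ (mulf_neq0 (mulf_neq0 hP0 hm0) (mulf_neq0 hP0 hm0))) [n [hn hn']].
  by have := hinf n hn; rewrite hn' eqxx.
Qed.
End S.

Theorem lemma4p5 (V : zmodType) (B : brace V) (a : V) (p : nat) :
  T_brace B ->
  zeta2 B a ->
  (forall n : nat, (0 < n)%N -> a *+ n != 0) ->
  prime p ->
  (forall z : V, zeta B z -> forall n : nat, (0 < n)%N -> z *+ n = 0 ->
     exists k : nat, z *+ (p ^ k) = 0) ->
  (bstar B a a) *+ p = 0.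
Proof. exact: (@main_sec V B a p). Qed.
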